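(* Fix an integer $k\ge2$ and $\delta\in(0,2)$. Let $\mathcal R_n(1),\dots,\mathcal R_n(k)$ be independent random sets, each distributed as $\mathcal S_{n,1}(1)$. Then, uniformly over $\bar J\in\mathcal B_{n,k,\delta}$, \[\mathbb P\big(\mathcal S_{n,1}(i)=J_i,\ i\in[k]\big)=(1+o(1))\,\mathbb P\big(\mathcal R_n(i)=J_i,\ i\in[k]\big)\quad\text{as }n\to\infty.\]
   Context: Kingman's $n$-coalescent $(F_n,\dots,F_1)$: forests on $[n]$; $F_n$ has no edges; for $2\le i\le n$, list the trees of $F_i$ as $T^{(i)}_1,\dots,T^{(i)}_i$ in increasing order of smallest label, choose $\{a_i,b_i\}$ uniformly among 2-subsets of $[i]$ and an independent fair bit $\xi_i$ (independent over $i$), and obtain $F_{i-1}$ by joining the roots of $T^{(i)}_{a_i},T^{(i)}_{b_i}$ by an edge directed according to $\xi_i$. $T_i(v)$ is the tree of $F_i$ containing $v$; $\mathcal S_n(v)=\{2\le i\le n:T_i(v)\in\{T^{(i)}_{a_i},T^{(i)}_{b_i}\}\}$; $\mathcal S_{n,1}(v)=\mathcal S_n(v)\setminus[\lfloor\ln^2 n\rfloor]$ (so $\mathcal S_{n,1}(1)$ contains each $m\in\{\lfloor\ln^2 n\rfloor+1,\dots,n\}$ independently with probability $2/m$). $\Omega_1$ is the power set of $\{\lfloor\ln^2 n\rfloor+1,\dots,n\}$, and for $\delta\in(0,2)$, $\mathcal B_{n,k,\delta}$ is the set of $\bar J=(J_1,\dots,J_k)\in\Omega_1^k$ with $J_1,\dots,J_k$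 pairwise disjoint and $||J_i|-2\ln n|\le\delta\ln n$ for all $i\in[k]$. *)

(* Defs.v *)
From Stdlib Require Import Reals List Arith ZArith Bool.
Import ListNotations.
Open Scope R_scope.

(* One step of randomness at stage i: a 2-subset {a,b} of [i], encoded
   0-based as (a,b) with a < b < i, together with the direction bit xi. *)
Definition step := (nat * nat * bool)%type.

Definition choices (i : nat) : list step :=
  flat_map (fun b => flat_map (fun a => [(a, b, true); (a, b, false)]) (seq 0 b))
           (seq 0 i).

(* All outcomes (c_i, c_{i-1}, ..., c_2) of the choices at stages i down to 2;
   each outcome is equally likely (independent uniform choices). *)
Fixpoint outcomes (i : nat) : list (list step) :=
  match i with
  | 0 => [[]]
  | S 0 => [[]]
  | S ((S _) as i') => flat_map (fun c => map (cons c) (outcomes i')) (choices i)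
  end.

Definition prob_coal (n : nat) (ev : list step -> bool) : R :=
  INR (length (filter ev (outcomes n))) / INR (length (outcomes n)).

(* A forest state is recorded by its trees' vertex sets (list of blocks),
   listed in increasing order of smallest label. *)
Fixpoint replace_nth {A} (j : nat) (x : A) (l : list A) : list A :=
  match l, j with
  | [], _ => []
  | _ :: t, 0%nat => x :: t
  | h :: t, S j' => h :: replace_nth j' x t
  end.

Fixpoint remove_nth {A} (j : nat) (l : list A) : list A :=
  match l, j with
  | [], _ => []
  | _ :: t, 0%nat => t
  | h :: t, S j' => h :: remove_nth j' t
  end.

(* Joining trees a < b: the union has the smallest label of tree a, so the
   increasing-min-label order is kept by putting it at position a and
   deleting position b. *)
Definition merge (st : list (list nat)) (a b : nat) : list (list nat) :=
  remove_nth b (replace_nth a (nth a st [] ++ nth b st []) st).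

Fixpoint find_block (v : nat) (st : list (list nat)) : nat :=
  match st with
  | [] => 0%nat
  | B :: t => if existsb (Nat.eqb v) B then 0%nat else S (find_block v t)
  end.

Fixpoint run (i : nat) (st : list (list nat)) (om : list step) (v : nat) : list nat :=
  match om with
  | [] => []
  | (a, b, _) :: rest =>
      let iv := find_block v st in
      (if (iv =? a)%nat || (iv =? b)%nat then [i] else [])
        ++ run (pred i) (merge st a b) rest v
  end.

Definition S_n (n : nat) (om : list step) (v : nat) : list nat :=
  run n (map (fun j => [j]) (seq 1 n)) om v.

Definition Lcut (n : nat) : nat := Z.to_nat (Int_part (ln (INR n) ^ 2)).

Definition S1_eq (n : nat) (om : list step) (v : nat) (J : nat -> bool) : bool :=
  forallb (fun m => Bool.eqb (existsb (Nat.eqb m) (S_n n om v) && (Lcut n <? m)%nat) (J m))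
          (seq 0 (S n)).

Definition probS (n k : nat) (J : nat -> nat -> bool) : R :=
  prob_coal n (fun om => forallb (fun i => S1_eq n om i (J i)) (seq 1 k)).

Definition probR (n k : nat) (J : nat -> nat -> bool) : R :=
  fold_right Rmult 1 (map (fun i => prob_coal n (fun om => S1_eq n om 1 (J i))) (seq 1 k)).

Definition card_upto (n : nat) (A : nat -> bool) : nat := length (filter A (seq 0 (S n))).

Definition in_B (n k : nat) (delta : R) (J : nat -> nat -> bool) : Prop :=
  (forall i, (1 <= i <= k)%nat -> forall m, J i m = true -> (Lcut n < m <= n)%nat) /\
  (forall i j, (1 <= i <= k)%nat -> (1 <= j <= k)%nat -> i <> j ->
     forall m, J i m = true -> J j m = false) /\
  (forall i, (1 <= i <= k)%nat ->
     Rabs (INR (card_upto n (J i)) - 2 * ln (INR n)) <= delta * ln (INR n)).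

(* Main.v *)
Require Import Defs.
From Stdlib Require Import Reals List Arith Lia Lra ZArith Bool.
Import ListNotations.
Open Scope nat_scope.

Definition pm (a b p : nat) : nat := if p =? b then a else if b <? p then pred p else p.

Fixpoint runp (i p : nat) (om : list step) : list nat :=
  match om with
  | [] => []
  | (a, b, _) :: rest =>
      (if (p =? a) || (p =? b) then [i] else []) ++ runp (pred i) (pm a b p) rest
  end.

Lemma length_replace_nth {A} (j : nat) (x : A) l : length (replace_nth j x l) = length l.
Proof. revert j; induction l; intros [|j]; simpl; auto. Qed.

Lemma length_remove_nth {A} (j : nat) (l : list A) : j < length l -> length (remove_nth j l) = pred (length l).
Proof. revert j; induction l; intros [|j]; simpl; intros; try lia. rewrite IHl; [|lia]. destruct l; simpl in *; lia. Qed.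

Lemma nth_replace_nth {A} (j q : nat) (x : A) l d : j < length l ->
  nth q (replace_nth j x l) d = if q =? j then x else nth q l d.
Proof. revert j q; induction l; intros [|j] [|q]; simpl; intros; try lia; auto.
  apply IHl; lia. Qed.

Lemma nth_remove_nth {A} (j q : nat) (l : list A) d :
  nth q (remove_nth j l) d = if q <? j then nth q l d else nth (S q) l d.
Proof. revert j q; induction l; intros [|j] [|q]; simpl; auto; [destruct (S q <? S j); auto| rewrite IHl; reflexivity]. Qed.

Definition Inv (st : list (list nat)) (v p : nat) : Prop :=
  p < length st /\ forall q, q < length st -> (existsb (Nat.eqb v) (nth q st []) = true <-> q = p).

Lemma find_block_inv st v p : Inv st v p -> find_block v st = p.
Proof.
  revert p; induction st as [|B t IH]; intros p [Hp H]; simpl in *; [lia|].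
  destruct (existsb (Nat.eqb v) B) eqn:E.
  - assert (0 = p) by (apply (H 0); auto; lia). auto.
  - destruct p as [|p]. { assert (HH := proj2 (H 0 ltac:(lia)) eq_refl). simpl in HH; congruence. }
    f_equal. apply IH. split; [lia|]. intros q Hq. rewrite (H (S q)); [|lia]. simpl. lia.
Qed.

Lemma merge_inv st a b v p : a < b -> b < length st -> Inv st v p ->
  Inv (merge st a b) v (pm a b p).
Proof.
  intros Hab Hb [Hp H]. unfold merge.
  assert (Hl : length (remove_nth b (replace_nth a (nth a st [] ++ nth b st []) st)) = pred (length st)).
  { rewrite length_remove_nth; rewrite length_replace_nth; lia. }
  split.
  - rewrite Hl. unfold pm. destruct (p =? b) eqn:E1; [|destruct (b <? p) eqn:E2];
    apply Nat.eqb_eq in E1 || apply Nat.eqb_neq in E1;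
    try (apply Nat.ltb_lt in E2 || apply Nat.ltb_ge in E2); lia.
  - rewrite Hl. intros q Hq. rewrite nth_remove_nth.
    destruct (q <? b) eqn:Eq.
    + apply Nat.ltb_lt in Eq. rewrite nth_replace_nth by lia.
      destruct (q =? a) eqn:Ea.
      * apply Nat.eqb_eq in Ea. subst q. rewrite existsb_app.
        rewrite Bool.orb_true_iff, (H a), (H b) by lia.
        unfold pm. destruct (p =? b) eqn:E1; [|destruct (b <? p) eqn:E2];
        apply Nat.eqb_eq in E1 || apply Nat.eqb_neq in E1;
        try (apply Nat.ltb_lt in E2 || apply Nat.ltb_ge in E2); lia.
      * apply Nat.eqb_neq in Ea. rewrite (H q) by lia.
        unfold pm. destruct (p =? b) eqn:E1; [|destruct (b <? p) eqn:E2];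
        apply Nat.eqb_eq in E1 || apply Nat.eqb_neq in E1;
        try (apply Nat.ltb_lt in E2 || apply Nat.ltb_ge in E2); lia.
    + apply Nat.ltb_ge in Eq. rewrite nth_replace_nth by lia.
      destruct (S q =? a) eqn:Ea; [apply Nat.eqb_eq in Ea; lia|].
      rewrite (H (S q)) by lia.
      unfold pm. destruct (p =? b) eqn:E1; [|destruct (b <? p) eqn:E2];
      apply Nat.eqb_eq in E1 || apply Nat.eqb_neq in E1;
      try (apply Nat.ltb_lt in E2 || apply Nat.ltb_ge in E2); lia.
Qed.

Lemma in_choices i c : In c (choices i) -> exists a b x, c = (a, b, x) /\ a < b < i.
Proof.
  unfold choices. intros H. apply in_flat_map in H as [b [Hb H]].
  apply in_flat_map in H as [a [Ha H]]. apply in_seq in Hb, Ha.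
  simpl in H. destruct H as [<-|[<-|[]]]; eexists _, _, _; split; eauto; lia.
Qed.

Lemma outcomes_SS i : outcomes (S (S i)) = flat_map (fun c => map (cons c) (outcomes (S i))) (choices (S (S i))).
Proof. reflexivity. Qed.

Lemma in_outcomes i om : In om (outcomes i) ->
  (om = [] /\ i <= 1) \/ exists a b x rest, om = (a, b, x) :: rest /\ a < b < i /\ In rest (outcomes (pred i)).
Proof.
  destruct i as [|[|i]]; intros H.
  - destruct H as [<-|[]]; auto.
  - destruct H as [<-|[]]; auto.
  - right. rewrite outcomes_SS in H. apply in_flat_map in H as [c [Hc H]]. apply in_map_iff in H as [r [<- Hr]].
    apply in_choices in Hc as [a [b [x [-> Hab]]]]. exists a, b, x, r. auto.
Qed.

Lemma run_runp : forall om i st v p, In om (outcomes i) -> length st = i -> Inv st v p ->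
  run i st om v = runp i p om.
Proof.
  induction om as [|c om IH]; intros i st v p Hom Hl Hinv; simpl; auto.
  apply in_outcomes in Hom as [[? _]|[a [b [x [rest [Heq [Hab Hr]]]]]]]; [discriminate|].
  injection Heq as -> ->. rewrite (find_block_inv _ _ _ Hinv). f_equal.
  apply IH; auto.
  - unfold merge. rewrite length_remove_nth; rewrite ?length_replace_nth; lia.
  - apply merge_inv; auto; lia.
Qed.

Lemma runp_le : forall om i p m, In m (runp i p om) -> m <= i.
Proof.
  induction om as [|[[a b] x] om IH]; intros i p m H; simpl in *; [tauto|].
  apply in_app_or in H as [H|H].
  - destruct ((p =? a) || (p =? b)); simpl in H; [destruct H as [<-|[]]; lia| tauto].
  - apply IH in H. lia.
Qed.
Open Scope nat_scope.

Definition hitb a b p := (p =? a) || (p =? b).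

Fixpoint Ev (L i p : nat) (Jv : nat -> bool) (om : list step) : bool :=
  match om with
  | [] => true
  | (a, b, _) :: rest => Bool.eqb (hitb a b p && (L <? i)) (Jv i) && Ev L (pred i) (pm a b p) Jv rest
  end.

Fixpoint Evs (L i : nat) (ps : list (nat * (nat -> bool))) (om : list step) : bool :=
  match om with
  | [] => true
  | (a, b, _) :: rest =>
      forallb (fun e => Bool.eqb (hitb a b (fst e) && (L <? i)) (snd e i)) ps &&
      Evs L (pred i) (map (fun e => (pm a b (fst e), snd e)) ps) rest
  end.

Lemma forallb_ext_in {A} (f g : A -> bool) l : (forall x, In x l -> f x = g x) -> forallb f l = forallb g l.
Proof. induction l; simpl; intros H; auto. rewrite H, IHl; auto. Qed.

Lemma ev_runp L : forall om i p Jv, length om = pred i -> (forall m, m <= 1 -> Jv m = false) ->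
  forallb (fun m => Bool.eqb (existsb (Nat.eqb m) (runp i p om) && (L <? m)) (Jv m)) (seq 0 (S i))
  = Ev L i p Jv om.
Proof.
  induction om as [|[[a b] x] om IH]; intros i p Jv Hl HJ.
  - apply forallb_forall. intros m Hm. apply in_seq in Hm. simpl in Hl. simpl. rewrite HJ by lia. reflexivity.
  - destruct i as [|i]; [simpl in Hl; discriminate|]. simpl in Hl.
    rewrite seq_S, forallb_app. cbn [runp Ev pred forallb Nat.add].
    rewrite <- (IH i (pm a b p) Jv) by (auto; destruct i; simpl in *; lia).
    rewrite andb_true_r, andb_comm. f_equal.
    + rewrite existsb_app. unfold hitb.
      assert (Hn : existsb (Nat.eqb (S i)) (runp i (pm a b p) om) = false).
      { destruct (existsb (Nat.eqb (S i)) (runp i (pm a b p) om)) eqn:E; auto.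
        apply existsb_exists in E as [m [Hm Em]]. apply Nat.eqb_eq in Em. subst m.
        apply runp_le in Hm. lia. }
      rewrite Hn, orb_false_r.
      destruct ((p =? a) || (p =? b)); simpl; rewrite ?Nat.eqb_refl; reflexivity.
    + apply forallb_ext_in. intros m Hm. apply in_seq in Hm. rewrite existsb_app.
      destruct ((p =? a) || (p =? b)); simpl; auto.
      destruct (m =? S i) eqn:E; [apply Nat.eqb_eq in E; lia|]. reflexivity.
Qed.

Lemma forallb_andb {A} (f g : A -> bool) l : forallb (fun x => f x && g x) l = forallb f l && forallb g l.
Proof. induction l; simpl; auto. rewrite IHl. destruct (f a), (g a), (forallb f l), (forallb g l); reflexivity. Qed.

Lemma ev_evs L : forall om i ps,
  forallb (fun e => Ev L i (fst e) (snd e) om) ps = Evs L i ps om.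
Proof.
  induction om as [|[[a b] x] om IH]; intros i ps; simpl.
  - apply forallb_forall; auto.
  - rewrite <- IH, forallb_andb. f_equal. clear IH. induction ps as [|e ps IHps]; simpl; auto.
    rewrite IHps. reflexivity.
Qed.

Lemma outcomes_length : forall om i, In om (outcomes i) -> length om = pred i.
Proof.
  induction om as [|c om IH]; intros i H; apply in_outcomes in H as [[? ?]|[a [b [x [rest [He [Hab Hr]]]]]]];
  try discriminate; simpl.
  - lia.
  - injection He as -> ->. apply IH in Hr. lia.
Qed.

Lemma init_inv n v : 1 <= v <= n -> Inv (map (fun j => [j]) (seq 1 n)) v (v - 1).
Proof.
  intros Hv. unfold Inv. rewrite length_map, length_seq. split; [lia|].
  intros q Hq. rewrite nth_indep with (d' := [0]) by (rewrite length_map, length_seq; lia).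
  rewrite (map_nth (fun j => [j]) (seq 1 n) 0 q), seq_nth by lia. simpl. rewrite orb_false_r, Nat.eqb_eq. lia.
Qed.

Lemma S1_eq_Ev n om v Jv : In om (outcomes n) -> 1 <= v <= n -> (forall m, m <= 1 -> Jv m = false) ->
  S1_eq n om v Jv = Ev (Lcut n) n (v - 1) Jv om.
Proof.
  intros Hom Hv HJ. unfold S1_eq, S_n.
  rewrite (run_runp om n _ v (v-1)); auto.
  - apply ev_runp; auto. apply outcomes_length; auto.
  - rewrite length_map, length_seq; auto.
  - apply init_inv; auto.
Qed.
Open Scope nat_scope.

Fixpoint tri (c : nat) : nat := match c with 0 => 0 | S c' => tri c' + c' end.
Definition g (L K : nat) (U : nat -> bool) (i : nat) : nat :=
  if i <=? L then tri i else if U i then i - K else tri (i - K).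
Fixpoint F (L K : nat) (U : nat -> bool) (i : nat) : nat :=
  match i with 0 => 1 | S i' => match i' with 0 => 1 | _ => 2 * g L K U i * F L K U i' end end.

Definition cnt (i : nat) (h : nat -> bool) : nat := length (filter h (seq 0 i)).
Fixpoint cp (i : nat) (f : nat -> nat -> bool) : nat :=
  match i with 0 => 0 | S i' => cp i' f + cnt i' (fun a => f a i') end.

Lemma cnt_S i h : cnt (S i) h = cnt i h + (if h i then 1 else 0).
Proof. unfold cnt. rewrite seq_S, filter_app, length_app. simpl. destruct (h i); reflexivity. Qed.

Lemma cnt_ext i h1 h2 : (forall a, a < i -> h1 a = h2 a) -> cnt i h1 = cnt i h2.
Proof. induction i; intros H; auto. rewrite !cnt_S, IHi, H by (auto; lia). reflexivity. Qed.

Lemma cnt_le i h : cnt i h <= i.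
Proof. induction i; auto. rewrite cnt_S. destruct (h i); lia. Qed.

Lemma cp_ext i f1 f2 : (forall a b, a < b < i -> f1 a b = f2 a b) -> cp i f1 = cp i f2.
Proof. induction i; intros H; simpl; auto. rewrite IHi by (intros; apply H; lia).
  f_equal. apply cnt_ext. intros; apply H; lia. Qed.

Lemma cp_both i o : cp i (fun a b => o a && o b) = tri (cnt i o).
Proof. induction i; simpl; auto. rewrite IHi, cnt_S.
  rewrite (cnt_ext i (fun a => o a && o i) (fun a => if o i then o a else false)) by (intros; destruct (o a), (o i); auto).
  destruct (o i).
  - rewrite Nat.add_1_r. simpl. reflexivity.
  - assert (cnt i (fun _ => false) = 0) as -> by (clear; induction i; auto; rewrite cnt_S; lia). rewrite !Nat.add_0_r; reflexivity.
Qed.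

Lemma cnt_eqp i p c : cnt i (fun a => (a =? p) && c) = if (p <? i) && c then 1 else 0.
Proof. induction i; simpl; [destruct c; auto|]. rewrite cnt_S, IHi.
  destruct (i =? p) eqn:E; [apply Nat.eqb_eq in E; subst|apply Nat.eqb_neq in E].
  - rewrite (proj2 (Nat.ltb_ge p p)), (proj2 (Nat.ltb_lt p (S p))) by lia. destruct c; reflexivity.
  - destruct (p <? i) eqn:E1; [apply Nat.ltb_lt in E1|apply Nat.ltb_ge in E1];
    rewrite ?(proj2 (Nat.ltb_lt p (S i))), ?(proj2 (Nat.ltb_ge p (S i))) by lia; destruct c; reflexivity.
Qed.

Lemma cp_one i o p : o p = true ->
  cp i (fun a b => ((a =? p) || (b =? p)) && o a && o b) = if p <? i then cnt i o - 1 else 0.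
Proof.
  intros Hp. induction i; simpl; auto. rewrite IHi.
  destruct (i =? p) eqn:E; [apply Nat.eqb_eq in E; subst|apply Nat.eqb_neq in E].
  - rewrite (proj2 (Nat.ltb_ge p p)), (proj2 (Nat.ltb_lt p (S p))) by lia.
    rewrite cnt_S, Hp. rewrite (cnt_ext p _ o) by (intros; rewrite orb_true_r; destruct (o a); auto). lia.
  - rewrite (cnt_ext i (fun a => ((a =? p) || false) && o a && o i) (fun a => (a =? p) && o i)).
    2:{ intros a Ha. rewrite orb_false_r.
        destruct (a =? p) eqn:Ea; simpl; auto. apply Nat.eqb_eq in Ea; subst. rewrite Hp. auto. }
    rewrite cnt_eqp, cnt_S.
    destruct (p <? i) eqn:E1; [apply Nat.ltb_lt in E1|apply Nat.ltb_ge in E1];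
    rewrite ?(proj2 (Nat.ltb_lt p (S i))), ?(proj2 (Nat.ltb_ge p (S i))) by lia; simpl.
    + assert (cnt i o >= 1).
      { clear IHi. induction i; [lia|]. rewrite cnt_S. destruct (i =? p) eqn:Ei.
        - apply Nat.eqb_eq in Ei; subst. rewrite Hp; lia.
        - apply Nat.eqb_neq in Ei. assert (p < i) by lia. specialize (IHi ltac:(lia) ltac:(lia)). lia. }
      destruct (o i); lia.
    + reflexivity.
Qed.

Definition out (P : list nat) (x : nat) : bool := negb (existsb (Nat.eqb x) P).

Lemma cnt_in i P : NoDup P -> (forall x, In x P -> x < i) -> cnt i (fun x => existsb (Nat.eqb x) P) = length P.
Proof.
  intros HN HP. unfold cnt. apply Nat.le_antisymm.
  - apply NoDup_incl_length. apply NoDup_filter, seq_NoDup.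
    intros x Hx. apply filter_In in Hx as [_ Hx]. apply existsb_exists in Hx as [y [Hy E]].
    apply Nat.eqb_eq in E; subst; auto.
  - apply NoDup_incl_length; auto. intros x Hx. apply filter_In. split.
    + apply in_seq. specialize (HP x Hx). lia.
    + apply existsb_exists. exists x. split; auto. apply Nat.eqb_refl.
Qed.

Lemma cnt_neg i h : cnt i h + cnt i (fun x => negb (h x)) = i.
Proof. induction i; auto. rewrite !cnt_S. destruct (h i); simpl; lia. Qed.

Lemma cnt_out i P : NoDup P -> (forall x, In x P -> x < i) -> cnt i (out P) = i - length P.
Proof. intros. pose proof (cnt_neg i (fun x => existsb (Nat.eqb x) P)). rewrite cnt_in in H1; auto.
  unfold out. lia. Qed.

Lemma filter_choices_row (H : step -> bool) b l :
  (forall a, H (a, b, true) = H (a, b, false)) ->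
  length (filter H (flat_map (fun a => [(a, b, true); (a, b, false)]) l)) = 2 * length (filter (fun a => H (a, b, true)) l).
Proof.
  intros Hs. induction l; simpl; auto. rewrite <- Hs. destruct (H (a, b, true)); simpl; lia.
Qed.

Lemma choices_S i : choices (S i) = choices i ++ flat_map (fun a => [(a, i, true); (a, i, false)]) (seq 0 i).
Proof. unfold choices. rewrite seq_S, flat_map_app. simpl. rewrite app_nil_r. reflexivity. Qed.

Lemma filter_choices (H : step -> bool) i :
  (forall a b, H (a, b, true) = H (a, b, false)) ->
  length (filter H (choices i)) = 2 * cp i (fun a b => H (a, b, true)).
Proof.
  intros Hs. induction i; simpl; auto. rewrite choices_S, filter_app, length_app, IHi, filter_choices_row by auto.
  unfold cnt. lia.
Qed.
Open Scope nat_scope.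

Definition good (L i : nat) (ps : list (nat * (nat -> bool))) : Prop :=
  (L < i -> NoDup (map fst ps)) /\ (forall e, In e ps -> fst e < i) /\
  (forall e, In e ps -> forall m, m <= L -> snd e m = false) /\
  (forall e1 e2, In e1 ps -> In e2 ps -> forall m, snd e1 m = true -> snd e2 m = true -> fst e1 = fst e2).

Definition Uf (ps : list (nat * (nat -> bool))) (m : nat) : bool := existsb (fun e => snd e m) ps.

Definition Hc (L i : nat) (ps : list (nat * (nat -> bool))) (c : step) : bool :=
  let '(a, b, _) := c in forallb (fun e => Bool.eqb (hitb a b (fst e) && (L <? i)) (snd e i)) ps.
Definition upd (c : step) (ps : list (nat * (nat -> bool))) :=
  let '(a, b, _) := c in map (fun e => (pm a b (fst e), snd e)) ps.

Lemma F_ext L K U1 U2 i : (forall m, U1 m = U2 m) -> F L K U1 i = F L K U2 i.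
Proof. intros H. induction i as [|[|i] IH]; auto. simpl in *. rewrite IH. unfold g. rewrite H. reflexivity. Qed.

Lemma length_filter_flat_map {A B} (f : B -> bool) (h : A -> list B) l :
  length (filter f (flat_map h l)) = list_sum (map (fun x => length (filter f (h x))) l).
Proof. induction l; simpl; auto. rewrite filter_app, length_app, IHl. reflexivity. Qed.

Lemma length_filter_cons (f : list step -> bool) c O :
  length (filter f (map (cons c) O)) = length (filter (fun r => f (c :: r)) O).
Proof. induction O; simpl; auto. destruct (f (c :: a)); simpl; auto. Qed.

Lemma sum_const {A} (H : A -> bool) (X : A -> nat) Y l : (forall c, In c l -> H c = true -> X c = Y) ->
  list_sum (map (fun c => if H c then X c else 0) l) = length (filter H l) * Y.
Proof. induction l; intros HX; simpl; auto. rewrite IHl by (intros; apply HX; simpl; auto).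
  destruct (H a) eqn:E; simpl; auto. rewrite HX; simpl; auto. Qed.

Lemma pm_lt a b p i : a < b < i -> p < i -> pm a b p < pred i.
Proof. unfold pm. intros. destruct (p =? b) eqn:E1; [|destruct (b <? p) eqn:E2];
  apply Nat.eqb_eq in E1 || apply Nat.eqb_neq in E1;
  try (apply Nat.ltb_lt in E2 || apply Nat.ltb_ge in E2); lia. Qed.

Lemma pm_inj a b x y : a < b -> pm a b x = pm a b y -> x = y \/ (x = a /\ y = b) \/ (x = b /\ y = a).
Proof. unfold pm. intros. destruct (Nat.eqb_spec x b), (Nat.ltb_spec b x), (Nat.eqb_spec y b), (Nat.ltb_spec b y); lia. Qed.

Lemma Hc_forall L i ps a b x e : Hc L i ps (a, b, x) = true -> In e ps ->
  Bool.eqb (hitb a b (fst e) && (L <? i)) (snd e i) = true.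
Proof. simpl. intros H He. rewrite forallb_forall in H. apply H; auto. Qed.

Lemma good_upd L i ps c : good L (S i) ps -> In c (choices (S i)) -> Hc L (S i) ps c = true ->
  good L i (upd c ps).
Proof.
  intros [HN [Hlt [HL HD]]] Hc' HH. apply in_choices in Hc' as [a [b [x [-> Hab]]]]. simpl upd.
  split; [|split; [|split]].
  - intros HLi. rewrite map_map. simpl.
    rewrite <- (map_map fst (pm a b)). apply NoDup_map_NoDup_ForallPairs; [|apply HN; lia].
    intros y z Hy Hz E. apply in_map_iff in Hy as [e1 [<- He1]]. apply in_map_iff in Hz as [e2 [<- He2]].
    apply pm_inj in E; [|lia].
    pose proof (Hc_forall _ _ _ _ _ _ _ HH He1) as H1. pose proof (Hc_forall _ _ _ _ _ _ _ HH He2) as H2.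
    unfold hitb in H1, H2. rewrite (proj2 (Nat.ltb_lt L (S i))) in H1, H2 by lia.
    destruct E as [E|[[E1 E2]|[E1 E2]]]; auto;
    rewrite E1, Nat.eqb_refl in H1; rewrite E2, Nat.eqb_refl in H2; rewrite ?orb_true_r in H1; rewrite ?orb_true_r in H2; simpl in H1, H2;
    destruct (snd e1 (S i)) eqn:F1; try discriminate; destruct (snd e2 (S i)) eqn:F2; try discriminate;
    pose proof (HD _ _ He1 He2 _ F1 F2); lia.
  - intros e He. apply in_map_iff in He as [e1 [<- He1]]. simpl. apply (pm_lt a b _ (S i)); [lia|]. apply Hlt; auto.
  - intros e He. apply in_map_iff in He as [e1 [<- He1]]. simpl. apply HL; auto.
  - intros e1 e2 He1 He2 m H1 H2. apply in_map_iff in He1 as [f1 [<- Hf1]]. apply in_map_iff in He2 as [f2 [<- Hf2]].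
    simpl in *. f_equal. apply (HD _ _ Hf1 Hf2 m); auto.
Qed.

Lemma Uf_upd c ps m : Uf (upd c ps) m = Uf ps m.
Proof. destruct c as [[a b] x]. unfold Uf, upd. induction ps; simpl; auto. rewrite IHps. reflexivity. Qed.

Lemma length_upd c ps : length (upd c ps) = length ps.
Proof. destruct c as [[a b] x]. simpl. apply length_map. Qed.

Lemma hforall a b (ps : list (nat * (nat -> bool))) i : (forall e, In e ps -> snd e i = false) ->
  forallb (fun e => Bool.eqb (hitb a b (fst e) && true) (snd e i)) ps = out (map fst ps) a && out (map fst ps) b.
Proof.
  induction ps as [|e ps IH]; intros H; simpl; auto. rewrite IH by (intros; apply H; simpl; auto). rewrite H by (simpl; auto).
  unfold out, hitb. simpl. rewrite (Nat.eqb_sym a (fst e)), (Nat.eqb_sym b (fst e)).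
  destruct (fst e =? a), (fst e =? b), (existsb (Nat.eqb a) (map fst ps)), (existsb (Nat.eqb b) (map fst ps)); reflexivity.
Qed.

Lemma out_app P1 P2 x : out (P1 ++ P2) x = out P1 x && out P2 x.
Proof. unfold out. rewrite existsb_app. destruct (existsb _ P1), (existsb _ P2); reflexivity. Qed.

Lemma count_stage L i ps : 2 <= i -> good L i ps ->
  cp i (fun a b => Hc L i ps (a, b, true)) = g L (length ps) (Uf ps) i.
Proof.
  intros Hi [HN [Hlt [HL HD]]]. unfold g.
  destruct (i <=? L) eqn:EiL; [apply Nat.leb_le in EiL|apply Nat.leb_gt in EiL].
  - rewrite (cp_ext _ _ (fun a b => (fun _ => true) a && (fun _ => true) b)).
    + rewrite cp_both. f_equal. unfold cnt. rewrite filter_true, length_seq. reflexivity.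
    + intros a b _. simpl. apply forallb_forall. intros e He. rewrite HL by auto.
      rewrite (proj2 (Nat.ltb_ge L i)) by lia. rewrite andb_false_r. reflexivity.
  - assert (HN' := HN EiL).
    destruct (Uf ps i) eqn:EU.
    + unfold Uf in EU. apply existsb_exists in EU as [e0 [He0 E0]].
      destruct (in_split _ _ He0) as [ps1 [ps2 Eps]].
      assert (Hoth : forall e, In e (ps1 ++ ps2) -> snd e i = false).
      { intros e He. destruct (snd e i) eqn:Ee; auto. exfalso.
        assert (Hin : In e ps) by (rewrite Eps; apply in_app_or in He as [?|?]; apply in_or_app; simpl; auto).
        pose proof (HD _ _ Hin He0 _ Ee E0) as Ef.
        rewrite Eps, map_app in HN'. simpl in HN'. apply NoDup_remove_2 in HN'. apply HN'.
        rewrite <- map_app. rewrite <- Ef. apply in_map; auto. }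
      set (P := map fst (ps1 ++ ps2)).
      rewrite (cp_ext _ _ (fun a b => ((a =? fst e0) || (b =? fst e0)) && out P a && out P b)).
      * rewrite cp_one.
        -- rewrite (proj2 (Nat.ltb_lt (fst e0) i)) by (apply Hlt; auto).
           rewrite cnt_out.
           ++ unfold P. rewrite Eps, !length_map, !length_app. simpl.
              assert (S (length (ps1 ++ ps2)) <= i).
              { rewrite Eps, map_app in HN'. simpl in HN'.
                pose proof (NoDup_remove_1 _ _ _ HN'). pose proof (NoDup_remove_2 _ _ _ HN').
                rewrite <- map_app in *.
                replace (S (length (ps1 ++ ps2))) with (length (fst e0 :: map fst (ps1 ++ ps2))) by (simpl; rewrite length_map; auto).
                rewrite <- (length_seq i 0). apply NoDup_incl_length; [constructor; auto|].
                intros y Hy. apply in_seq. destruct Hy as [<-|Hy]; [specialize (Hlt e0 He0); lia|].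
                apply in_map_iff in Hy as [e [<- He]]. assert (In e ps) by (rewrite Eps; apply in_app_or in He as [?|?]; apply in_or_app; simpl; auto).
                specialize (Hlt e H1). lia. }
              rewrite length_app in H. lia.
           ++ unfold P. rewrite Eps, map_app in HN'. simpl in HN'. rewrite map_app. apply NoDup_remove_1 in HN'. auto.
           ++ intros y Hy. unfold P in Hy. apply in_map_iff in Hy as [e [<- He]]. apply Hlt. rewrite Eps.
              apply in_app_or in He as [?|?]; apply in_or_app; simpl; auto.
        -- unfold out. destruct (existsb (Nat.eqb (fst e0)) P) eqn:E; auto. exfalso.
           apply existsb_exists in E as [y [Hy Ey]]. apply Nat.eqb_eq in Ey. subst y.
           rewrite Eps, map_app in HN'. simpl in HN'. apply NoDup_remove_2 in HN'. apply HN'. rewrite <- map_app. auto.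
      * intros a b _. simpl. rewrite (proj2 (Nat.ltb_lt L i)) by lia. rewrite Eps, forallb_app. simpl.
        rewrite (hforall a b ps1 i), (hforall a b ps2 i)
          by (intros; apply Hoth; apply in_or_app; auto).
        rewrite E0. unfold P. rewrite map_app, !out_app. unfold hitb.
        rewrite (Nat.eqb_sym (fst e0) a), (Nat.eqb_sym (fst e0) b).
        destruct (out (map fst ps1) a), (out (map fst ps1) b), (out (map fst ps2) a), (out (map fst ps2) b),
          (a =? fst e0), (b =? fst e0); reflexivity.
    + assert (Hall : forall e, In e ps -> snd e i = false).
      { intros e He. destruct (snd e i) eqn:E; auto. unfold Uf in EU.
        assert (existsb (fun e => snd e i) ps = true) by (apply existsb_exists; eauto). congruence. }
      rewrite (cp_ext _ _ (fun a b => out (map fst ps) a && out (map fst ps) b)).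
      * rewrite cp_both, cnt_out, length_map; auto.
        intros y Hy. apply in_map_iff in Hy as [e [<- He]]. auto.
      * intros a b _. simpl. rewrite (proj2 (Nat.ltb_lt L i)) by lia. apply hforall; auto.
Qed.

Theorem count L : forall i ps, good L i ps ->
  length (filter (Evs L i ps) (outcomes i)) = F L (length ps) (Uf ps) i.
Proof.
  induction i as [|[|j] IH]; intros ps Hg; [reflexivity|reflexivity|].
  rewrite outcomes_SS, length_filter_flat_map.
  rewrite (map_ext_in _ (fun c => if Hc L (S (S j)) ps c then length (filter (Evs L (S j) (upd c ps)) (outcomes (S j))) else 0)).
  2:{ intros [[a b] x] _. rewrite length_filter_cons. simpl Evs. simpl Hc. simpl upd.
      set (X := forallb _ ps). set (O := outcomes (S j)). clearbody O. destruct X.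
      - reflexivity.
      - clear. induction O; simpl; auto. }
  rewrite (sum_const _ _ (F L (length ps) (Uf ps) (S j))).
  - rewrite filter_choices.
    + rewrite count_stage by (auto; lia). simpl F. lia.
    + intros; reflexivity.
  - intros c Hin HH. rewrite IH.
    + rewrite length_upd. apply F_ext. apply Uf_upd.
    + apply good_upd; auto.
Qed.
Open Scope R_scope.

Lemma frac_le a b c d : 0 < b -> 0 < d -> a * d <= c * b -> a / b <= c / d.
Proof.
  intros Hb Hd H. unfold Rdiv.
  replace (a * / b) with ((a * d) * / (b * d)) by (field; lra).
  replace (c * / d) with ((c * b) * / (b * d)) by (field; lra).
  apply Rmult_le_compat_r; auto. apply Rlt_le, Rinv_0_lt_compat, Rmult_lt_0_compat; auto.
Qed.

Lemma exp_pow x n : exp x ^ n = exp (INR n * x).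
Proof. induction n; simpl. - rewrite Rmult_0_l, exp_0; auto. - rewrite IHn, <- exp_plus. f_equal.
  destruct n; simpl; lra. Qed.

Lemma B_ge I : 2 < I -> exp (- (2 / (I - 2))) <= (I - 2) / I.
Proof.
  intros HI. pose proof (exp_ineq1_le (2 / (I - 2))) as H.
  rewrite exp_Ropp. replace ((I - 2) / I) with (/ (1 + 2 / (I - 2))) by (field; lra).
  apply Rinv_le_contravar; auto.
  assert (0 < 2 / (I-2)) by (apply Rdiv_lt_0_compat; lra). lra.
Qed.

Lemma B_pos I : 2 < I -> 0 < (I - 2) / I.
Proof. intros; apply Rdiv_lt_0_compat; lra. Qed.

Lemma Bpow_ge I n : 2 < I -> exp (- (INR n * (2 / (I - 2)))) <= ((I - 2) / I) ^ n.
Proof.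
  intros HI. replace (- (INR n * (2 / (I - 2)))) with (INR n * (- (2 / (I - 2)))) by ring.
  rewrite <- exp_pow. apply pow_incr. split; [apply Rlt_le, exp_pos|]. apply B_ge; auto.
Qed.

Lemma Bpow_le1 I n : 2 < I -> 0 <= ((I - 2) / I) ^ n <= 1.
Proof.
  intros HI. split. - apply pow_le. apply Rlt_le, B_pos; auto.
  - rewrite <- (pow1 n). apply pow_incr. split; [apply Rlt_le, B_pos; auto|].
    apply (Rmult_le_reg_r I); [lra|]. unfold Rdiv. rewrite Rmult_assoc, Rinv_l by lra. lra.
Qed.

Lemma bern t n : 0 <= t -> 1 + INR n * t <= (1 + t) ^ n.
Proof.
  intros Ht. induction n; simpl; [lra|].
  assert (0 <= INR n) by apply pos_INR.
  destruct n; simpl in *; [lra|]. nra.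
Qed.

Lemma Bpow_le I n : 2 < I -> ((I - 2) / I) ^ n <= (I - 2) / (I - 2 + 2 * INR n).
Proof.
  intros HI. assert (0 <= INR n) by apply pos_INR.
  replace ((I - 2) / I) with (/ (1 + 2 / (I - 2))) by (field; lra).
  rewrite pow_inv. replace ((I - 2) / (I - 2 + 2 * INR n)) with (/ (1 + INR n * (2 / (I - 2)))) by (field; lra).
  apply Rinv_le_contravar.
  - assert (0 <= INR n * (2 / (I - 2))) by (apply Rmult_le_pos; auto; apply Rlt_le, Rdiv_lt_0_compat; lra). lra.
  - apply bern. apply Rlt_le, Rdiv_lt_0_compat; lra.
Qed.

(* stage where a tracked vertex's tree merges *)
Lemma stageU_lo (k : nat) I y : (1 <= k)%nat -> INR k + 3 <= I -> (INR k - 1) / (I - 1) <= y ->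
  2 / I * ((I - 2) / I) ^ (k - 1) * (1 - y) <= (I - INR k) / (I * (I - 1) / 2).
Proof.
  intros Hk HI Hy. set (K := INR k) in *.
  assert (HK1 : 1 <= K) by (unfold K; replace 1 with (INR 1) by reflexivity; apply le_INR; lia).
  destruct (Bpow_le1 I (k - 1)) as [B0 B1]; [lra|].
  assert (Hs : 0 <= (I - K) / (I * (I - 1) / 2)) by (apply Rmult_le_pos; [lra|]; apply Rlt_le, Rinv_0_lt_compat; nra).
  destruct (Rle_dec (1 - y) 0).
  - assert (0 <= 2 / I * ((I - 2) / I) ^ (k - 1)) by (apply Rmult_le_pos; auto; apply Rlt_le, Rdiv_lt_0_compat; lra). nra.
  - apply Rle_trans with (2 / I * (1 - y)).
    + apply Rmult_le_compat_r; [lra|]. rewrite <- (Rmult_1_r (2 / I)) at 2. apply Rmult_le_compat_l; auto.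
      apply Rlt_le, Rdiv_lt_0_compat; lra.
    + apply Rle_trans with (2 / I * (1 - (K - 1) / (I - 1))).
      * apply Rmult_le_compat_l; [apply Rlt_le, Rdiv_lt_0_compat; lra| lra].
      * right. field. lra.
Qed.

Lemma stageU_hi (k : nat) I z : (1 <= k)%nat -> INR k + 3 <= I -> 2 * (INR k - 1) / (I - 2) <= z ->
  (I - INR k) / (I * (I - 1) / 2) <= 2 / I * ((I - 2) / I) ^ (k - 1) * exp z.
Proof.
  intros Hk HI Hz. set (K := INR k) in *.
  assert (HK1 : 1 <= K) by (unfold K; replace 1 with (INR 1) by reflexivity; apply le_INR; lia).
  assert (E : INR (k - 1) = K - 1) by (unfold K; rewrite minus_INR by lia; simpl; lra).
  pose proof (Bpow_ge I (k - 1)) as Hb. rewrite E in Hb.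
  assert (H1 : 1 <= ((I - 2) / I) ^ (k - 1) * exp z).
  { apply Rle_trans with (exp (- ((K - 1) * (2 / (I - 2)))) * exp z).
    - rewrite <- exp_plus. rewrite <- exp_0 at 1.
      destruct (Req_dec ((- ((K - 1) * (2 / (I - 2))) + z)) 0) as [E0|E0]; [rewrite E0; lra|].
      left. apply exp_increasing. replace (2 * (K - 1) / (I - 2)) with ((K - 1) * (2 / (I - 2))) in Hz by (field; lra). lra.
    - apply Rmult_le_compat_r; [apply Rlt_le, exp_pos|]. apply Hb. lra. }
  apply Rle_trans with (2 / I).
  - apply frac_le; [nra|lra|]. nra.
  - rewrite Rmult_assoc. rewrite <- (Rmult_1_r (2 / I)) at 1. apply Rmult_le_compat_l; auto.
    apply Rlt_le, Rdiv_lt_0_compat; lra.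
Qed.

Lemma stageN_lo (k : nat) I y : (1 <= k)%nat -> INR k + 3 <= I -> 4 * INR k ^ 2 / ((I - 1) * (I - 2)) <= y ->
  ((I - 2) / I) ^ k * (1 - y) <= ((I - INR k) * (I - INR k - 1) / 2) / (I * (I - 1) / 2).
Proof.
  intros Hk HI Hy. set (K := INR k) in *.
  assert (HK1 : 1 <= K) by (unfold K; replace 1 with (INR 1) by reflexivity; apply le_INR; lia).
  destruct (Bpow_le1 I k) as [B0 B1]; [lra|].
  assert (Hs : 0 <= ((I - K) * (I - K - 1) / 2) / (I * (I - 1) / 2)).
  { apply Rmult_le_pos; [|apply Rlt_le, Rinv_0_lt_compat; nra]. apply Rmult_le_pos; [nra|lra]. }
  destruct (Rle_dec (1 - y) 0); [nra|].
  pose proof (Bpow_le I k ltac:(lra)) as Hb. fold K in Hb.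
  apply Rle_trans with ((I - 2) / (I - 2 + 2 * K) * (1 - 4 * K ^ 2 / ((I - 1) * (I - 2)))).
  - apply Rle_trans with ((I - 2) / (I - 2 + 2 * K) * (1 - y)).
    + apply Rmult_le_compat_r; lra.
    + apply Rmult_le_compat_l; [apply Rlt_le, Rdiv_lt_0_compat; lra| lra].
  - replace ((I - 2) / (I - 2 + 2 * K) * (1 - 4 * K ^ 2 / ((I - 1) * (I - 2))))
      with (((I - 1) * (I - 2) - 4 * K ^ 2) / ((I - 2 + 2 * K) * (I - 1))) by (field; lra).
    replace (((I - K) * (I - K - 1) / 2) / (I * (I - 1) / 2)) with ((I - K) * (I - K - 1) / (I * (I - 1))) by (field; lra).
    apply frac_le; [nra|nra|].
    assert (0 <= (K ^ 2 + 3 * K) * I + 2 * K * (K ^ 2 - 1)) by nra.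
    assert (E : (I - K) * (I - K - 1) * ((I - 2 + 2 * K) * (I - 1)) - ((I - 1) * (I - 2) - 4 * K ^ 2) * (I * (I - 1))
              = (I - 1) * ((K ^ 2 + 3 * K) * I + 2 * K * (K ^ 2 - 1))) by ring.
    nra.
Qed.

Lemma stageN_hi (k : nat) I z : (1 <= k)%nat -> INR k + 3 <= I -> 3 * INR k / ((I - 1) * (I - 2)) <= z ->
  ((I - INR k) * (I - INR k - 1) / 2) / (I * (I - 1) / 2) <= ((I - 2) / I) ^ k * exp z.
Proof.
  intros Hk HI Hz. set (K := INR k) in *.
  assert (HK1 : 1 <= K) by (unfold K; replace 1 with (INR 1) by reflexivity; apply le_INR; lia).
  replace (((I - K) * (I - K - 1) / 2) / (I * (I - 1) / 2)) with ((1 + - (K / I)) * (1 + - (K / (I - 1)))) by (field; lra).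
  apply Rle_trans with (exp (- (K / I)) * exp (- (K / (I - 1)))).
  - apply Rmult_le_compat.
    + assert (K / I <= 1) by (apply (Rmult_le_reg_r I); [lra|]; unfold Rdiv; rewrite Rmult_assoc, Rinv_l by lra; lra). lra.
    + assert (K / (I - 1) <= 1) by (apply (Rmult_le_reg_r (I - 1)); [lra|]; unfold Rdiv; rewrite Rmult_assoc, Rinv_l by lra; lra). lra.
    + apply exp_ineq1_le.
    + apply exp_ineq1_le.
  - apply Rle_trans with (exp (- (INR k * (2 / (I - 2)))) * exp z).
    + rewrite <- !exp_plus. fold K.
      assert (H3 : 2 * K / (I - 2) - K / I - K / (I - 1) <= 3 * K / ((I - 1) * (I - 2))).
      { replace (2 * K / (I - 2) - K / I - K / (I - 1)) with (K * (3 * I - 2) / (I * (I - 1) * (I - 2))) by (field; lra).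
        apply frac_le; [nra|nra|].
        assert (0 <= K * ((I - 1) * (I - 2))) by (apply Rmult_le_pos; nra).
        assert (E : 3 * K * (I * (I - 1) * (I - 2)) - K * (3 * I - 2) * ((I - 1) * (I - 2)) = 2 * (K * ((I - 1) * (I - 2)))) by ring.
        lra. }
      destruct (Req_dec (- (K / I) + - (K / (I - 1))) (- (K * (2 / (I - 2))) + z)) as [E|E]; [rewrite E; lra|].
      left. apply exp_increasing.
      replace (K * (2 / (I - 2))) with (2 * K / (I - 2)) by (field; lra). lra.
    + apply Rmult_le_compat_r; [apply Rlt_le, exp_pos|]. apply Bpow_ge. lra.
Qed.
Open Scope R_scope.

Fixpoint sumf (f : nat -> R) (L m : nat) : R :=
  match m with 0 => 0 | S m' => sumf f L m' + f (S (L + m')%nat) end.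

Lemma chain (aS aR s q y z : nat -> R) (L : nat) :
  (forall m, aS (S (L + m)%nat) = s (S (L + m)%nat) * aS (L + m)%nat) ->
  (forall m, aR (S (L + m)%nat) = q (S (L + m)%nat) * aR (L + m)%nat) ->
  aS L = 1 -> aR L = 1 ->
  (forall i, (L < i)%nat -> 0 <= s i /\ 0 <= q i /\ 0 <= y i /\ q i * (1 - y i) <= s i /\ s i <= q i * exp (z i)) ->
  forall m, 0 <= aS (L + m)%nat /\ 0 <= aR (L + m)%nat /\ 0 <= sumf y L m /\
    aR (L + m)%nat * (1 - sumf y L m) <= aS (L + m)%nat /\ aS (L + m)%nat <= aR (L + m)%nat * exp (sumf z L m).
Proof.
  intros HS HR S0 R0 Hst. induction m as [|m IH].
  - rewrite Nat.add_0_r, S0, R0. simpl. rewrite exp_0. lra.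
  - rewrite Nat.add_succ_r, HS, HR. simpl sumf.
    destruct IH as [A1 [A2 [A3 [A4 A5]]]].
    destruct (Hst (S (L + m)%nat) ltac:(lia)) as [B1 [B2 [B3 [B4 B5]]]].
    set (s' := s (S (L + m)%nat)) in *. set (q' := q (S (L + m)%nat)) in *. set (y' := y (S (L + m)%nat)) in *.
    set (z' := z (S (L + m)%nat)) in *. set (Y := sumf y L m) in *. set (Z := sumf z L m) in *.
    set (aS' := aS (L + m)%nat) in *. set (aR' := aR (L + m)%nat) in *.
    split; [nra|]. split; [nra|]. split; [lra|]. split.
    + destruct (Rle_dec (1 - (Y + y')) 0).
      * assert (0 <= q' * aR') by nra. nra.
      * apply Rle_trans with (s' * (aR' * (1 - Y))); [|apply Rmult_le_compat_l; auto].
        apply Rle_trans with (q' * (1 - y') * (aR' * (1 - Y))).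
        -- assert (0 <= q' * aR' * (y' * Y)) by (repeat apply Rmult_le_pos; auto). nra.
        -- apply Rmult_le_compat_r; auto. apply Rmult_le_pos; lra.
    + rewrite exp_plus. pose proof (exp_pos Z). pose proof (exp_pos z').
      apply Rle_trans with (s' * (aR' * exp Z)); [apply Rmult_le_compat_l; auto|].
      apply Rle_trans with (q' * exp z' * (aR' * exp Z)); [apply Rmult_le_compat_r; auto; nra|].
      right; ring.
Qed.

Lemma sumf_S f L m : sumf f L (S m) = sumf f L m + f (S (L + m)%nat).
Proof. reflexivity. Qed.

Lemma sum_tele (L m : nat) (c : R) : (2 <= L)%nat -> 0 <= c ->
  sumf (fun i => c * (1 / (INR i - 2) - 1 / (INR i - 1))) L m = c * (1 / (INR L - 1) - 1 / (INR (L + m)%nat - 1)).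
Proof.
  intros HL Hc. assert (2 <= INR L) by (replace 2 with (INR 2) by (simpl; lra); apply le_INR; auto).
  induction m.
  - simpl. rewrite Nat.add_0_r. ring.
  - rewrite sumf_S, IHm. rewrite Nat.add_succ_r, S_INR.
    assert (0 <= INR m) by apply pos_INR. rewrite plus_INR. field. split; lra.
Qed.
Open Scope R_scope.

Definition rho (L K : nat) (U : nat -> bool) (i : nat) : R :=
  INR (F L K U i) / INR (F L 0 (fun _ => false) i).

Fixpoint prodk (f : nat -> R) (k : nat) : R := match k with 0%nat => 1 | S k' => prodk f k' * f (S k') end.

Lemma fold_mult_x l x : fold_right Rmult x l = fold_right Rmult 1 l * x.
Proof. induction l; simpl; [ring|rewrite IHl; ring]. Qed.

Lemma fold_prodk f k : fold_right Rmult 1 (map f (seq 1 k)) = prodk f k.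
Proof. induction k; [reflexivity|]. cbn [prodk]. rewrite seq_S, map_app, fold_right_app. simpl.
  rewrite fold_mult_x, IHk. f_equal. ring. Qed.

Lemma prodk_ext f h k : (forall j, (1 <= j <= k)%nat -> f j = h j) -> prodk f k = prodk h k.
Proof. induction k; intros H; simpl; auto. rewrite IHk, H; auto; try lia. intros; apply H; lia. Qed.

Lemma prodk_mult f h k : prodk (fun j => f j * h j) k = prodk f k * prodk h k.
Proof. induction k; simpl; [ring|rewrite IHk; ring]. Qed.

Lemma prodk_1 k : prodk (fun _ => 1) k = 1.
Proof. induction k; simpl; auto. rewrite IHk; ring. Qed.

Lemma prodk_nonneg f k : (forall j, 0 <= f j) -> 0 <= prodk f k.
Proof. induction k; simpl; intros; [lra|]. apply Rmult_le_pos; auto. Qed.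

Lemma prodk_one f (b : nat -> bool) A B k :
  (forall j, (1 <= j <= k)%nat -> f j = if b j then A else B) ->
  (forall j1 j2, (1 <= j1 <= k)%nat -> (1 <= j2 <= k)%nat -> b j1 = true -> b j2 = true -> j1 = j2) ->
  prodk f k = if existsb b (seq 1 k) then A * B ^ (k - 1) else B ^ k.
Proof.
  induction k; intros Hf Hb; [reflexivity|]. cbn [prodk].
  rewrite IHk by (intros; try apply Hf; try apply Hb; auto; lia).
  rewrite seq_S, existsb_app. simpl. rewrite orb_false_r, Hf by lia.
  destruct (b (S k)) eqn:E.
  - assert (existsb b (seq 1 k) = false).
    { destruct (existsb b (seq 1 k)) eqn:E2; auto. apply existsb_exists in E2 as [j [Hj Ej]].
      apply in_seq in Hj. specialize (Hb j (S k) ltac:(lia) ltac:(lia) Ej E). lia. }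
    rewrite H, orb_true_r. rewrite Nat.sub_0_r. ring.
  - rewrite orb_false_r. destruct (existsb b (seq 1 k)) eqn:E2.
    + destruct k as [|k]; [simpl in E2; discriminate|]. simpl. rewrite Nat.sub_0_r. ring.
    + ring.
Qed.

Lemma INR_tri c : INR (tri c) = INR c * (INR c - 1) / 2.
Proof. induction c; simpl tri; [simpl; lra|]. rewrite plus_INR, IHc, S_INR. field. Qed.

Lemma tri_pos c : (2 <= c)%nat -> (1 <= tri c)%nat.
Proof. intros. destruct c as [|[|c]]; try lia. simpl. lia. Qed.

Lemma g0 L i : g L 0 (fun _ => false) i = tri i.
Proof. unfold g. destruct (i <=? L); auto. rewrite Nat.sub_0_r; auto. Qed.

Lemma F0_pos L i : (1 <= F L 0 (fun _ => false) i)%nat.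
Proof. induction i as [|[|i] IH]; simpl; auto.
  change (1 <= 2 * g L 0 (fun _ => false) (S (S i)) * F L 0 (fun _ => false) (S i))%nat.
  rewrite g0. pose proof (tri_pos (S (S i)) ltac:(lia)). nia. Qed.

Lemma rho_S L K U i : (1 <= i)%nat ->
  rho L K U (S i) = INR (g L K U (S i)) / INR (tri (S i)) * rho L K U i.
Proof.
  intros Hi. destruct i as [|j]; [lia|]. unfold rho.
  change (F L K U (S (S j))) with (2 * g L K U (S (S j)) * F L K U (S j))%nat.
  change (F L 0 (fun _ => false) (S (S j))) with (2 * g L 0 (fun _ => false) (S (S j)) * F L 0 (fun _ => false) (S j))%nat.
  rewrite g0, !mult_INR. pose proof (F0_pos L (S j)). pose proof (tri_pos (S (S j)) ltac:(lia)).
  field. repeat split; apply not_0_INR; lia.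
Qed.

Lemma rho_le_L L K U i : (1 <= i <= L)%nat -> rho L K U i = 1.
Proof.
  induction i as [|i IH]; intros Hi; [lia|]. destruct i as [|i].
  - unfold rho. simpl. field.
  - rewrite rho_S by lia. rewrite IH by lia. unfold g. rewrite (proj2 (Nat.leb_le (S (S i)) L)) by lia.
    pose proof (tri_pos (S (S i)) ltac:(lia)). field. apply not_0_INR; lia.
Qed.

Lemma Evs_nil L : forall om i, Evs L i [] om = true.
Proof. induction om as [|[[a b] x] om IH]; intros; simpl; auto. Qed.

Lemma total_outcomes n : INR (length (outcomes n)) = INR (F (Lcut n) 0 (fun _ => false) n).
Proof.
  rewrite <- (F_ext _ _ (Uf [])) by reflexivity.
  assert (C : good (Lcut n) n []) by (repeat split; simpl; intros; try tauto; constructor).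
  apply count in C. cbn [length] in C. rewrite <- C.
  f_equal. rewrite (filter_ext_in (Evs (Lcut n) n []) (fun _ => true)) by (intros; apply Evs_nil). rewrite filter_true. auto.
Qed.

Lemma forallb_map' {A B} (f : B -> bool) (h : A -> B) l : forallb f (map h l) = forallb (fun x => f (h x)) l.
Proof. induction l; simpl; auto. rewrite IHl; auto. Qed.

Definition psS (k : nat) (J : nat -> nat -> bool) := map (fun v => ((v - 1)%nat, J v)) (seq 1 k).

Lemma map_pred_seq k : map (fun v => (v - 1)%nat) (seq 1 k) = seq 0 k.
Proof. rewrite <- seq_shift, map_map. simpl. rewrite map_ext with (g := fun x => x) by (intros; lia). apply map_id. Qed.

Lemma probS_rho n k delta J : (k <= n)%nat -> (1 <= Lcut n)%nat -> in_B n k delta J ->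
  probS n k J = rho (Lcut n) k (Uf (psS k J)) n.
Proof.
  intros Hkn HL [HB1 [HB2 HB3]]. unfold probS, prob_coal, rho. rewrite total_outcomes. f_equal. f_equal.
  rewrite (filter_ext_in _ (Evs (Lcut n) n (psS k J))).
  - rewrite count.
    + unfold psS. rewrite length_map, length_seq. reflexivity.
    + unfold good, psS. split; [|split; [|split]].
      * intros _. rewrite map_map. simpl. rewrite map_pred_seq. apply seq_NoDup.
      * intros e He. apply in_map_iff in He as [v [<- Hv]]. apply in_seq in Hv. simpl. lia.
      * intros e He m Hm. apply in_map_iff in He as [v [<- Hv]]. apply in_seq in Hv. simpl.
        destruct (J v m) eqn:E; auto. specialize (HB1 v ltac:(lia) m E). lia.
      * intros e1 e2 He1 He2 m H1 H2. apply in_map_iff in He1 as [v [<- Hv]]. apply in_map_iff in He2 as [w [<- Hw]].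
        apply in_seq in Hv, Hw. simpl in *. destruct (Nat.eq_dec v w); [subst; auto|].
        rewrite (HB2 v w ltac:(lia) ltac:(lia) n0 m H1) in H2. discriminate.
  - intros om Hom. rewrite <- ev_evs. unfold psS. rewrite forallb_map'. simpl.
    apply forallb_ext_in. intros v Hv. apply in_seq in Hv. apply S1_eq_Ev; auto; [lia|].
    intros m Hm. destruct (J v m) eqn:E; auto. specialize (HB1 v ltac:(lia) m E). lia.
Qed.

Lemma probR1_rho n Jv : (1 <= n)%nat -> (1 <= Lcut n)%nat -> (forall m, Jv m = true -> (Lcut n < m)%nat) ->
  prob_coal n (fun om => S1_eq n om 1 Jv) = rho (Lcut n) 1 (Uf [(0%nat, Jv)]) n.
Proof.
  intros Hn HL HJ. unfold prob_coal, rho. rewrite total_outcomes. f_equal. f_equal.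
  rewrite (filter_ext_in _ (Evs (Lcut n) n [(0%nat, Jv)])).
  - rewrite count; auto. unfold good. split; [|split; [|split]].
    + intros _. simpl. constructor; auto. constructor.
    + intros e [<-|[]]. simpl; lia.
    + intros e [<-|[]] m Hm. simpl. destruct (Jv m) eqn:E; auto. apply HJ in E. lia.
    + intros e1 e2 [<-|[]] [<-|[]]; auto.
  - intros om Hom. rewrite <- ev_evs. simpl. rewrite andb_true_r.
    rewrite S1_eq_Ev; auto. intros m Hm. destruct (Jv m) eqn:E; auto. apply HJ in E. lia.
Qed.
Open Scope R_scope.

Lemma exp_le x y : x <= y -> exp x <= exp y.
Proof. intros [H|H]; [left; apply exp_increasing; auto|subst; lra]. Qed.

Lemma Lcut_ge n : INR (Lcut n) >= ln (INR n) ^ 2 - 1.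
Proof.
  unfold Lcut. set (r := ln (INR n) ^ 2). assert (0 <= r) by (unfold r; rewrite <- Rsqr_pow2; apply Rle_0_sqr).
  destruct (base_Int_part r) as [H1 H2].
  assert (HZ : (0 <= Int_part r)%Z). { apply Z.lt_succ_r. apply lt_IZR. rewrite succ_IZR. simpl. lra. }
  rewrite INR_IZR_INZ, Z2Nat.id by auto. lra.
Qed.

Lemma cnt_or i a b : (cnt i (fun x => a x || b x) <= cnt i a + cnt i b)%nat.
Proof. induction i; auto. rewrite !cnt_S. destruct (a i), (b i); simpl; lia. Qed.

Lemma cnt_exists i (J : nat -> nat -> bool) k B : (forall v, (1 <= v <= k)%nat -> INR (cnt i (J v)) <= B) ->
  INR (cnt i (fun m => existsb (fun v => J v m) (seq 1 k))) <= INR k * B.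
Proof.
  induction k; intros H.
  - simpl.
    assert (cnt i (fun _ => false) = 0%nat) as -> by (clear; induction i; auto; rewrite cnt_S; lia). simpl; lra.
  - rewrite (cnt_ext i _ (fun m => existsb (fun v => J v m) (seq 1 k) || J (S k) m)).
    2:{ intros. rewrite seq_S, existsb_app. simpl. rewrite orb_false_r. reflexivity. }
    eapply Rle_trans; [apply le_INR, cnt_or|]. rewrite plus_INR, S_INR.
    assert (IH := IHk ltac:(intros; apply H; lia)). assert (H1 := H (S k) ltac:(lia)). lra.
Qed.

Lemma cnt_pos i h : (0 < cnt i h)%nat -> exists m, (m < i)%nat /\ h m = true.
Proof. induction i; intros H; [unfold cnt in H; simpl in H; lia|]. rewrite cnt_S in H. destruct (h i) eqn:E.
  - exists i; split; [lia|auto]. - destruct IHi as [m [? ?]]; [lia|]. exists m; split; auto. Qed.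

Lemma Uf_psS k J m : Uf (psS k J) m = existsb (fun v => J v m) (seq 1 k).
Proof. unfold Uf, psS. induction (seq 1 k); simpl; auto. rewrite IHl; auto. Qed.

Lemma sumf_plus f h L m : sumf (fun i => f i + h i) L m = sumf f L m + sumf h L m.
Proof. induction m; simpl; [lra|rewrite IHm; ring]. Qed.

Lemma sumf_ind (u : nat -> bool) d D L m : (forall i, (L < i)%nat -> d i <= D) ->
  sumf (fun i => (if u i then 1 else 0) * d i) L m <= D * (INR (cnt (S (L + m)) u) - INR (cnt (S L) u)).
Proof.
  intros Hd. induction m.
  - simpl. rewrite Nat.add_0_r. lra.
  - rewrite sumf_S. rewrite Nat.add_succ_r, (cnt_S (S (L + m))), plus_INR.
    specialize (Hd (S (L + m)) ltac:(lia)). destruct (u (S (L + m))); simpl; lra.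
Qed.

Lemma tele_eq c I : 2 < I -> c * (1 / (I - 2) - 1 / (I - 1)) = c / ((I - 1) * (I - 2)).
Proof. intros. field. split; intro; lra. Qed.

Lemma tele_nonneg I : 2 < I -> 0 <= 1 / (I - 2) - 1 / (I - 1).
Proof. intros. rewrite <- (Rmult_1_l (_ - _)), tele_eq by lra. apply Rlt_le, Rdiv_lt_0_compat; nra. Qed.

Lemma final_num K x D m0 : 2 <= K -> 0 < m0 -> 32 * K ^ 2 / m0 + K + 4 <= x -> x ^ 2 - 2 <= D ->
  16 * K ^ 2 * x / D <= m0.
Proof.
  intros HK Hm Hx HD.
  assert (H0 : 0 <= 32 * K ^ 2 / m0) by (apply Rlt_le, Rdiv_lt_0_compat; nra).
  assert (Hx6 : 6 <= x) by lra.
  assert (HD2 : x ^ 2 / 2 <= D) by nra.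
  assert (HDp : 0 < D) by nra.
  assert (Hxm : 32 * K ^ 2 <= x * m0).
  { assert (32 * K ^ 2 / m0 <= x) by lra.
    apply (Rmult_le_compat_r m0) in H; [|lra]. unfold Rdiv in H. rewrite Rmult_assoc, Rinv_l in H by lra. lra. }
  apply (Rmult_le_reg_r D); auto. unfold Rdiv. rewrite Rmult_assoc, Rinv_l by lra. nra.
Qed.
Open Scope R_scope.

Lemma cnt_false i : cnt i (fun _ => false) = 0%nat.
Proof. induction i; auto. rewrite cnt_S; lia. Qed.

Theorem proposition4p5 (k : nat) (delta : R) :
  (2 <= k)%nat -> 0 < delta < 2 ->
  forall eps : R, eps > 0 ->
  exists N : nat, forall n : nat, (N <= n)%nat ->
  forall J : nat -> nat -> bool, in_B n k delta J ->
  Rabs (probS n k J - probR n k J) <= eps * probR n k J.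
Proof.
  intros Hk Hd eps Heps.
  set (K := INR k).
  assert (HK : 2 <= K) by (unfold K; replace 2 with (INR 2) by (simpl; lra); apply le_INR; auto).
  assert (Hl1 : 0 < ln (1 + eps)) by (rewrite <- ln_1; apply ln_increasing; lra).
  set (m0 := Rmin eps (ln (1 + eps))).
  assert (Hm0 : 0 < m0) by (unfold m0; apply Rmin_glb_lt; lra).
  assert (Hm1 : m0 <= eps) by apply Rmin_l.
  assert (Hm2 : m0 <= ln (1 + eps)) by apply Rmin_r.
  set (X0 := 32 * K ^ 2 / m0 + K + 4).
  assert (HX0 : 0 <= 32 * K ^ 2 / m0) by (apply Rlt_le, Rdiv_lt_0_compat; nra).
  exists (Nat.max k (Z.to_nat (up (exp X0)))).
  intros n Hn J HB.
  set (x := ln (INR n)).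
  assert (Hx : X0 < x).
  { destruct (archimed (exp X0)) as [H1 _].
    assert (Hz : (0 <= up (exp X0))%Z) by (apply le_IZR; pose proof (exp_pos X0); lra).
    assert (H0 : INR (Z.to_nat (up (exp X0))) <= INR n) by (apply le_INR; lia).
    rewrite (INR_IZR_INZ (Z.to_nat _)), Z2Nat.id in H0 by auto.
    unfold x. rewrite <- (ln_exp X0). apply ln_increasing; [apply exp_pos|lra]. }
  assert (Hx6 : 6 <= x) by (unfold X0 in Hx; lra).
  set (L := Lcut n).
  assert (HLr : INR L >= x ^ 2 - 1) by apply Lcut_ge.
  assert (HLk : (k + 3 <= L)%nat).
  { apply INR_le. rewrite plus_INR. simpl (INR 3). fold K. unfold X0 in Hx. nra. }
  assert (Hkn : (k <= n)%nat) by lia.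
  pose proof HB as [HB1 [HB2 HB3]].
  assert (HnL : (L < n)%nat).
  { specialize (HB3 1%nat ltac:(lia)). fold x in HB3.
    assert (Hc : 0 < INR (card_upto n (J 1%nat))).
    { destruct (Rabs_def2 _ _ (Rle_lt_trans _ _ (delta * x + 1) HB3 ltac:(lra))) as [_ H2].
      destruct (Rle_dec (INR (card_upto n (J 1%nat))) 0) as [H3|H3]; [|lra].
      assert (Rabs (INR (card_upto n (J 1%nat)) - 2 * x) = 2 * x - INR (card_upto n (J 1%nat))).
      { rewrite Rabs_left1 by lra. ring. }
      nra. }
    assert (Hc' : (0 < card_upto n (J 1%nat))%nat) by (apply INR_lt; simpl; lra).
    unfold card_upto in Hc'. fold (cnt (S n) (J 1%nat)) in Hc'.
    destruct (cnt_pos _ _ Hc') as [m [Hm Em]]. specialize (HB1 1%nat ltac:(lia) m Em). lia. }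
  rewrite (probS_rho n k delta J) by (auto; lia). fold L.
  unfold probR.
  rewrite (map_ext_in _ (fun i => rho L 1 (Uf [(0%nat, J i)]) n)).
  2:{ intros i Hi. apply in_seq in Hi. apply probR1_rho; [lia|lia|]. intros m Hm. apply (HB1 i ltac:(lia) m Hm). }
  rewrite fold_prodk.
  set (US := Uf (psS k J)).
  set (s := fun i => INR (g L k US i) / INR (tri i)).
  set (q := fun i => prodk (fun j => INR (g L 1 (Uf [(0%nat, J j)]) i) / INR (tri i)) k).
  set (y := fun i => 4 * K ^ 2 * (1 / (INR i - 2) - 1 / (INR i - 1)) + (if US i then 1 else 0) * (K / (INR i - 1))).
  set (z := fun i => 3 * K * (1 / (INR i - 2) - 1 / (INR i - 1)) + (if US i then 1 else 0) * (2 * K / (INR i - 2))).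
  assert (Hch := chain (fun i => rho L k US i) (fun i => prodk (fun j => rho L 1 (Uf [(0%nat, J j)]) i) k) s q y z L).
  assert (HL1 : (1 <= L)%nat) by lia.
  assert (HLr2 : 2 <= INR L) by (replace 2 with (INR 2) by (simpl; lra); apply le_INR; lia).
  assert (C1 : forall m, rho L k US (S (L + m)) = s (S (L + m)) * rho L k US (L + m)).
  { intros m. rewrite rho_S by lia. reflexivity. }
  assert (C2 : forall m, prodk (fun j => rho L 1 (Uf [(0%nat, J j)]) (S (L + m))) k =
     q (S (L + m)) * prodk (fun j => rho L 1 (Uf [(0%nat, J j)]) (L + m)) k).
  { intros m. unfold q. rewrite <- prodk_mult. apply prodk_ext. intros j _. apply rho_S. lia. }
  assert (C3 : rho L k US L = 1) by (apply rho_le_L; lia).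
  assert (C4 : prodk (fun j => rho L 1 (Uf [(0%nat, J j)]) L) k = 1).
  { rewrite (prodk_ext _ (fun _ => 1)); [apply prodk_1|]. intros j _. apply rho_le_L. lia. }
  assert (C5 : forall i, (L < i)%nat -> 0 <= s i /\ 0 <= q i /\ 0 <= y i /\ q i * (1 - y i) <= s i /\ s i <= q i * exp (z i)).
  { intros i Hi. set (I := INR i).
    assert (HI : INR k + 3 + 1 <= I).
    { unfold I. replace (INR k + 3 + 1) with (INR (k + 4)) by (rewrite plus_INR; simpl; ring). apply le_INR. lia. }
    fold K in HI.
    assert (Hk1 : (1 <= k)%nat) by lia.
    assert (Hgi : (i <=? L)%nat = false) by (apply Nat.leb_gt; lia).
    assert (Es : s i = if existsb (fun v => J v i) (seq 1 k) then (I - K) / (I * (I - 1) / 2)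
                      else ((I - K) * (I - K - 1) / 2) / (I * (I - 1) / 2)).
    { unfold s, g. rewrite Hgi. unfold US. rewrite Uf_psS.
      destruct (existsb _ _); rewrite !INR_tri, ?minus_INR by lia; reflexivity. }
    assert (Eq : q i = if existsb (fun v => J v i) (seq 1 k) then 2 / I * ((I - 2) / I) ^ (k - 1)
                      else ((I - 2) / I) ^ k).
    { unfold q. apply prodk_one.
      - intros j Hj. unfold g. rewrite Hgi. unfold Uf. simpl. rewrite orb_false_r.
        destruct (J j i); rewrite !INR_tri, ?minus_INR by lia; simpl; fold I; field; repeat split; intro; lra.
      - intros j1 j2 Hj1 Hj2 E1 E2. destruct (Nat.eq_dec j1 j2); auto.
        rewrite (HB2 j1 j2 Hj1 Hj2 n0 i E1) in E2. discriminate. }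
    assert (Ey : y i = 4 * K ^ 2 * (1 / (I - 2) - 1 / (I - 1)) + (if existsb (fun v => J v i) (seq 1 k) then 1 else 0) * (K / (I - 1)))
      by (unfold y, US; rewrite Uf_psS; reflexivity).
    assert (Ez : z i = 3 * K * (1 / (I - 2) - 1 / (I - 1)) + (if existsb (fun v => J v i) (seq 1 k) then 1 else 0) * (2 * K / (I - 2)))
      by (unfold z, US; rewrite Uf_psS; reflexivity).
    rewrite Es, Eq, Ey, Ez.
    pose proof (tele_nonneg I ltac:(lra)) as Tn.
    pose proof (Bpow_le1 I (k - 1) ltac:(lra)) as [B0 B1].
    pose proof (Bpow_le1 I k ltac:(lra)) as [B2 B3].
    assert (0 <= K / (I - 1)) by (apply Rlt_le, Rdiv_lt_0_compat; lra).
    assert (0 <= 2 * K / (I - 2)) by (apply Rlt_le, Rdiv_lt_0_compat; lra).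
    assert (0 <= 4 * K ^ 2 * (1 / (I - 2) - 1 / (I - 1))) by (apply Rmult_le_pos; nra).
    assert (0 <= 3 * K * (1 / (I - 2) - 1 / (I - 1))) by (apply Rmult_le_pos; nra).
    destruct (existsb _ _).
    - split; [apply Rmult_le_pos; [lra|apply Rlt_le, Rinv_0_lt_compat; nra]|].
      split; [apply Rmult_le_pos; [apply Rlt_le, Rdiv_lt_0_compat; lra|auto]|].
      split; [lra|]. split.
      + apply stageU_lo; auto; [fold K; lra|]. fold K.
        assert ((K - 1) / (I - 1) <= K / (I - 1)) by (apply frac_le; nra). lra.
      + apply stageU_hi; auto; [fold K; lra|]. fold K.
        assert (2 * (K - 1) / (I - 2) <= 2 * K / (I - 2)) by (apply frac_le; nra). lra.
    - split.
      { apply Rmult_le_pos; [|apply Rlt_le, Rinv_0_lt_compat; nra]. apply Rmult_le_pos; [nra|lra]. }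
      split; [auto|]. split; [lra|]. split.
      + apply stageN_lo; auto; [fold K; lra|]. fold K. rewrite tele_eq by lra. lra.
      + apply stageN_hi; auto; [fold K; lra|]. fold K. rewrite tele_eq by lra. lra. }
  destruct (Hch C1 C2 C3 C4 C5 (n - L)%nat) as [A1 [A2 [A3 [A4 A5]]]].
  replace (L + (n - L))%nat with n in * by lia.
  set (Lr := INR L) in *.
  assert (Hn2 : 2 <= INR n - 1).
  { replace (INR n - 1) with (INR (n - 1)) by (rewrite minus_INR by lia; simpl; ring).
    replace 2 with (INR 2) by (simpl; ring). apply le_INR. lia. }
  assert (HcL : cnt (S L) US = 0%nat).
  { rewrite (cnt_ext _ _ (fun _ => false)); [apply cnt_false|]. intros a Ha. unfold US. rewrite Uf_psS.
    destruct (existsb _ _) eqn:E; auto. apply existsb_exists in E as [v [Hv Ev]]. apply in_seq in Hv.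
    specialize (HB1 v ltac:(lia) a Ev). lia. }
  assert (HC : INR (cnt (S n) US) <= K * (4 * x)).
  { rewrite (cnt_ext _ _ (fun m => existsb (fun v => J v m) (seq 1 k))) by (intros; unfold US; apply Uf_psS).
    apply cnt_exists. intros v Hv. specialize (HB3 v Hv). fold x in HB3.
    change (card_upto n (J v)) with (cnt (S n) (J v)) in HB3.
    pose proof (Rle_abs (INR (cnt (S n) (J v)) - 2 * x)). nra. }
  assert (EY : sumf y L (n - L) = sumf (fun i => 4 * K ^ 2 * (1 / (INR i - 2) - 1 / (INR i - 1))) L (n - L)
                + sumf (fun i => (if US i then 1 else 0) * (K / (INR i - 1))) L (n - L))
    by (apply (sumf_plus (fun i => 4 * K ^ 2 * (1 / (INR i - 2) - 1 / (INR i - 1))) (fun i => (if US i then 1 else 0) * (K / (INR i - 1))))).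
  assert (EZ : sumf z L (n - L) = sumf (fun i => 3 * K * (1 / (INR i - 2) - 1 / (INR i - 1))) L (n - L)
                + sumf (fun i => (if US i then 1 else 0) * (2 * K / (INR i - 2))) L (n - L))
    by (apply (sumf_plus (fun i => 3 * K * (1 / (INR i - 2) - 1 / (INR i - 1))) (fun i => (if US i then 1 else 0) * (2 * K / (INR i - 2))))).
  rewrite sum_tele in EY, EZ by (lia || nra).
  replace (L + (n - L))%nat with n in EY, EZ by lia.
  fold Lr in EY, EZ.
  pose proof (sumf_ind US (fun i => K / (INR i - 1)) (K / Lr) L (n - L)) as SY.
  pose proof (sumf_ind US (fun i => 2 * K / (INR i - 2)) (2 * K / (Lr - 1)) L (n - L)) as SZ.
  replace (S (L + (n - L)))%nat with (S n) in SY, SZ by lia.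
  rewrite HcL in SY, SZ. simpl (INR 0) in SY, SZ.
  assert (SY' : sumf (fun i => (if US i then 1 else 0) * (K / (INR i - 1))) L (n - L) <= K / Lr * (K * (4 * x))).
  { eapply Rle_trans; [apply SY|].
    - intros i Hi. assert (Lr + 1 <= INR i) by (unfold Lr; rewrite <- S_INR; apply le_INR; lia).
      apply frac_le; nra.
    - apply Rmult_le_compat_l; [apply Rlt_le, Rdiv_lt_0_compat; lra|lra]. }
  assert (SZ' : sumf (fun i => (if US i then 1 else 0) * (2 * K / (INR i - 2))) L (n - L) <= 2 * K / (Lr - 1) * (K * (4 * x))).
  { eapply Rle_trans; [apply SZ|].
    - intros i Hi. assert (Lr + 1 <= INR i) by (unfold Lr; rewrite <- S_INR; apply le_INR; lia).
      apply frac_le; nra.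
    - apply Rmult_le_compat_l; [apply Rlt_le, Rdiv_lt_0_compat; lra|lra]. }
  assert (Hinv : 0 <= 1 / (INR n - 1)) by (apply Rlt_le, Rdiv_lt_0_compat; lra).
  assert (HD : x ^ 2 - 2 <= Lr - 1) by lra.
  pose proof (final_num K x (Lr - 1) m0 HK Hm0 ltac:(unfold X0 in Hx; lra) HD) as FN.
  assert (HDp : 0 < Lr - 1) by nra.
  assert (HY : sumf y L (n - L) <= eps).
  { assert (sumf y L (n - L) <= 16 * K ^ 2 * x / (Lr - 1)).
    { rewrite EY. eapply Rle_trans; [apply Rplus_le_compat; [|apply SY']; apply Rle_refl|].
      assert (K / Lr * (K * (4 * x)) <= 4 * K ^ 2 * x / (Lr - 1)).
      { replace (K / Lr * (K * (4 * x))) with (4 * K ^ 2 * x / Lr) by (field; lra). apply frac_le; nra. }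
      assert (4 * K ^ 2 * (1 / (Lr - 1) - 1 / (INR n - 1)) <= 4 * K ^ 2 * x / (Lr - 1)).
      { assert (4 * K ^ 2 * (1 / (Lr - 1)) <= 4 * K ^ 2 * x / (Lr - 1)).
        { replace (4 * K ^ 2 * (1 / (Lr - 1))) with ((4 * K ^ 2) / (Lr - 1)) by (field; lra). apply frac_le; [lra|lra|].
          apply Rmult_le_compat_r; [lra|]. assert (0 <= K ^ 2) by nra. nra. }
        nra. }
      replace (16 * K ^ 2 * x / (Lr - 1)) with (4 * K ^ 2 * x / (Lr - 1) * 4) by (field; lra).
      assert (0 <= 4 * K ^ 2 * x / (Lr - 1)) by (apply Rlt_le, Rdiv_lt_0_compat; nra). lra. }
    lra. }
  assert (HZ : sumf z L (n - L) <= ln (1 + eps)).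
  { assert (sumf z L (n - L) <= 16 * K ^ 2 * x / (Lr - 1)).
    { rewrite EZ. eapply Rle_trans; [apply Rplus_le_compat; [|apply SZ']; apply Rle_refl|].
      assert (2 * K / (Lr - 1) * (K * (4 * x)) = 8 * K ^ 2 * x / (Lr - 1)) by (field; lra).
      assert (3 * K * (1 / (Lr - 1) - 1 / (INR n - 1)) <= 8 * K ^ 2 * x / (Lr - 1)).
      { assert (3 * K * (1 / (Lr - 1)) <= 8 * K ^ 2 * x / (Lr - 1)).
        { replace (3 * K * (1 / (Lr - 1))) with ((3 * K) / (Lr - 1)) by (field; lra). apply frac_le; [lra|lra|].
          apply Rmult_le_compat_r; [lra|]. assert (2 * K <= K ^ 2) by nra. nra. }
        nra. }
      replace (16 * K ^ 2 * x / (Lr - 1)) with (8 * K ^ 2 * x / (Lr - 1) * 2) by (field; lra). lra. }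
    lra. }
  set (aS := rho L k US n) in *. set (aR := prodk (fun j => rho L 1 (Uf [(0%nat, J j)]) n) k) in *.
  assert (exp (sumf z L (n - L)) <= 1 + eps).
  { rewrite <- (exp_ln (1 + eps)) by lra. apply exp_le; auto. }
  apply Rabs_le. split; nra.
Qed.
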